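(* Let $G$ be a finite graph and $k=\chi(G)$. If every $k$-coloring of $G^2=G\times G$ is trivial (in particular, if $G$ is trivially power-colorable), then $G$ is tight.
   Context: Graphs are simple and undirected; a $k$-coloring is a proper coloring with colors in $\{0,\dots,k-1\}$. The product $G\times G$ has vertex set $V(G)\times V(G)$, with $(u,v)$ adjacent to $(u',v')$ iff $uu'\in E(G)$ and $vv'\in E(G)$; $G^n$ is the analogous product of $n$ copies. A coloring $\Phi$ of a product $\times_{i\in I}G_i$ is trivial if there exist $i^*\in I$ and a proper coloring $\phi$ of $G_{i^*}$ with $\Phi(v)=\phi(v_{i^*})$ for all $v$. A graph $H$ is trivially power-colorable if for every positive integer $n$, every $\chi(H)$-coloring of $H^n$ is trivial. A $k$-coloring $\phi$ of $G$ is tight if for every vertex $v$ and every color $c\ne\phi(v)$ there is a neighbor $u$ of $v$ with $\phi(u)=c$. $G$ is tight if all of its $\chi(G)$-colorings are tight. *)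

(* Defs.v *)
From mathcomp Require Import all_boot.
Set Implicit Arguments. Unset Strict Implicit. Unset Printing Implicit Defensive.

Definition simple_graph (T : finType) (e : rel T) : Prop :=
  symmetric e /\ irreflexive e.

Definition proper_coloring (T : finType) (e : rel T) (k : nat) (f : T -> 'I_k) : Prop :=
  forall u v, e u v -> f u != f v.

Definition colorable (T : finType) (e : rel T) (k : nat) : bool :=
  [exists f : {ffun T -> 'I_k}, [forall u, forall v, e u v ==> (f u != f v)]].

(* Auxiliary predicate that always has the witness #|T| (so that ex_minn
   applies); for irreflexive e, colorable e k holds for k = #|T| anyway,
   so the minimum is the chromatic number. *)
Definition colorable_or_big (T : finType) (e : rel T) (k : nat) : bool :=
  colorable e k || (#|T| <= k).

Lemma colorable_or_big_ex (T : finType) (e : rel T) :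
  exists k, colorable_or_big e k.
Proof. by exists #|T|; rewrite /colorable_or_big leqnn orbT. Qed.

Definition chi (T : finType) (e : rel T) : nat := ex_minn (colorable_or_big_ex e).

Definition prod_rel (T : finType) (e : rel T) : rel (T * T)%type :=
  fun x y => e x.1 y.1 && e x.2 y.2.

Definition trivial_coloring2 (T : finType) (e : rel T) (k : nat)
    (F : (T * T)%type -> 'I_k) : Prop :=
  exists phi : T -> 'I_k, proper_coloring e phi /\
    ((forall x, F x = phi x.1) \/ (forall x, F x = phi x.2)).

Definition tight_coloring (T : finType) (e : rel T) (k : nat) (phi : T -> 'I_k) : Prop :=
  forall (v : T) (c : 'I_k), c != phi v -> exists u, e v u /\ phi u = c.

Definition tight (T : finType) (e : rel T) : Prop :=
  forall phi : T -> 'I_(chi e), proper_coloring e phi -> tight_coloring e phi.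

(* Main.v *)
Require Import Defs.
From mathcomp Require Import all_boot.
From Stdlib Require Import Lia.
From mathcomp Require Import zify.

Theorem mainTheorem5 (T : finType) (e : rel T) :
  simple_graph e ->
  (forall F : (T * T)%type -> 'I_(chi e),
      proper_coloring (prod_rel e) F -> trivial_coloring2 e F) ->
  tight e.
Proof.
move=> [esym eirr] H phi Hphi v c Hc.
case: (boolP [exists u, e v u && (phi u == c)]).
  by case/existsP=> u /andP[evu /eqP pu]; exists u.
rewrite negb_exists => /forallP Hno.
have Hno' u : e v u -> phi u != c.
  by move=> evu; have := Hno u; rewrite evu.
pose phi' x := if x == v then c else phi x.
have compat x x' : e x x' -> phi' x != phi x'.
  move=> exx; rewrite /phi'; case: (eqVneq x v) => [Ex|_]; last exact: Hphi.
  by rewrite eq_sym; apply: Hno'; rewrite -Ex.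
have prop' x x' : e x x' -> phi' x != phi' x'.
  move=> exx; rewrite {2}/phi'; case: (eqVneq x' v) => [Ex'|_]; last exact: compat.
  have Nx : x != v by apply/eqP=> Ex; move: exx; rewrite Ex Ex' eirr.
  rewrite /phi' (negbTE Nx); apply: Hno'; by rewrite -Ex' esym.
pose F (p : T * T) := if p.2 == v then phi' p.1 else phi p.1.
have PF : proper_coloring (prod_rel e) F.
  move=> [x y] [x' y'] /andP /= [exx eyy]; rewrite /F /=.
  case: (y == v); case: (y' == v).
  - exact: prop'.
  - exact: compat.
  - by rewrite eq_sym; apply: compat; rewrite esym.
  - exact: Hphi.
have [a [b eab]] : exists a b, e a b.
  case: (boolP [exists a, exists b, e a b]).
    by case/existsP=> a /existsP[b eab]; exists a, b.
  rewrite negb_exists => /forallP Hn.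
  have C1 : colorable_or_big e 1.
    apply/orP; left; apply/existsP; exists [ffun=> ord0].
    apply/forallP=> u; apply/forallP=> w; apply/implyP=> euw.
    by have := Hn u; rewrite negb_exists => /forallP/(_ w); rewrite euw.
  have le1 : chi e <= 1.
    rewrite /chi; case: ex_minnP => m _ Hm; exact: Hm.
  exfalso; move/negP: Hc; apply; apply/eqP; apply: val_inj.
  have := ltn_ord c; have := ltn_ord (phi v); move: le1; rewrite /=; lia.
have ya : exists y, (y != v) && ((y == a) || (y == b)).
  case: (eqVneq a v) => [Eav|Nav]; last by exists a; rewrite Nav eqxx.
  exists b; rewrite eqxx orbT andbT; apply/eqP=> Ebv.
  by move: eab; rewrite Eav Ebv eirr.
have [y /andP[yv _]] := ya.
have [psi [_ [Hpsi|Hpsi]]] := H F PF.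
  have := Hpsi (v, y); have := Hpsi (v, v).
  rewrite /F /= eqxx (negbTE yv) /phi' eqxx => <- E.
  by move: Hc; rewrite E eqxx.
have := Hpsi (a, y); have := Hpsi (b, y).
rewrite /F /= (negbTE yv) => <- E.
by move: (Hphi _ _ eab); rewrite E eqxx.
Qed.
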